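(* Let $k_1,\dots,k_m$ and $r_1,\dots,r_n$ be positive integers. Then $L_{k_1}\times\cdots\times L_{k_m}\equiv L_{r_1}\times\cdots\times L_{r_n}$ if and only if $m=n$ and there is a permutation $\gamma$ of $\{1,\dots,m\}$ with $k_i=r_{\gamma(i)}$ for all $i$ (i.e. the two products consist of exactly the same devices).
   Context: An abstract storage device (ASD) is a pair $D=(\mathcal{S}_D,\mathcal{P}_D)$, $\mathcal{S}_D$ a finite set and $\mathcal{P}_D$ a finite family of partitions of $\mathcal{S}_D$. The kernel of a function $f$ is the partition of its domain into the nonempty fibers $f^{-1}(y)$. The binary linear device $L_n$ has state space $\{0,1\}^n$ and partition set consisting of the kernels of all $\mathbb{F}_2$-linear maps $\{0,1\}^n\to\{0,1\}$. For a partition $\pi$ of $\mathcal{S}'$ and $\phi:\mathcal{S}\to\mathcal{S}'$, $\pi\circ\phi$ is the partition of $\mathcal{S}$ with $x,y$ in the same block iff $\phi(x),\phi(y)$ are in the same block of $\pi$; $\pi\preceq\rho$ means every block of $\pi$ lies in a block of $\rho$. $D\le D'$ means there exist $\phi:\mathcal{S}_D\to\mathcal{S}_{D'}$, $\alpha:\mathcal{P}_D\to\mathcal{P}_{D'}$ with $\alpha(\pi)\circ\phi\preceq\pi$ for all $\pi\in\mathcal{P}_D$; $D\equiv D'$ means $D\le D'$ and $D'\le D$. The direct product $D\times D'$ has state space $\mathcal{S}_D\times\mathcal{S}_{D'}$ and partition set $\{\pi\times\pi':\pi\in\mathcal{P}_D,\pi'\in\mathcal{P}_{D'}\}$ with $\pi\times\pi'=\{B\times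 B':B\in\pi,B'\in\pi'\}$. *)

(* Defs.v *)
From HB Require Import structures.
From mathcomp Require Import all_boot all_order all_algebra all_fingroup.
Set Implicit Arguments. Unset Strict Implicit. Unset Printing Implicit Defensive.
Import GRing.Theory.
Local Open Scope ring_scope.

(* An abstract storage device: a finite state space and a finite family of
   partitions of it (each partition is a set of blocks). *)
Record asd := ASD { st : finType ; parts : {set {set {set st}}} }.

Definition kernel (S T : finType) (f : S -> T) : {set {set S}} :=
  [set [set y | f y == f x] | x : S].

Definition pcomp (S S' : finType) (pi : {set {set S'}}) (phi : S -> S')
  : {set {set S}} := kernel (fun x => pblock pi (phi x)).

Definition refines (S : finType) (pi rho : {set {set S}}) : Prop :=
  forall B, B \in pi -> exists2 C, C \in rho & B \subset C.

Definition asd_le (D D' : asd) : Prop :=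
  exists (phi : st D -> st D') (alpha : {set {set st D}} -> {set {set st D'}}),
    forall pi, pi \in parts D ->
      alpha pi \in parts D' /\ refines (pcomp (alpha pi) phi) pi.

Definition asd_equiv (D D' : asd) : Prop := asd_le D D' /\ asd_le D' D.

(* binary linear device L_n : states {0,1}^n, partitions = kernels of all
   F_2-linear maps {0,1}^n -> {0,1} *)
Definition F2lin (n : nat) (f : {ffun 'rV['F_2]_n -> 'F_2}) : bool :=
  [forall a : 'F_2, forall u : 'rV['F_2]_n, forall v : 'rV['F_2]_n,
     f (a *: u + v) == a * f u + f v].

Definition L (n : nat) : asd :=
  @ASD 'rV['F_2]_n [set kernel (fun x => f x) | f : {ffun 'rV['F_2]_n -> 'F_2} & F2lin f].

(* direct product of a finite family of devices D_0 x ... x D_(m-1):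
   states are tuples, partitions are products of partitions
   pi_0 x ... x pi_(m-1) whose blocks are products B_0 x ... x B_(m-1). *)
Definition prod_state (m : nat) (D : 'I_m -> asd) : finType :=
  {dffun forall i : 'I_m, st (D i)}.

Definition prod_part (m : nat) (D : 'I_m -> asd)
  (p : {dffun forall i : 'I_m, {set {set st (D i)}}}) : {set {set prod_state D}} :=
  [set [set x : prod_state D | [forall i, x i \in B i]]
    | B : {dffun forall i : 'I_m, {set st (D i)}} & [forall i, B i \in p i]].

Definition prod_asd (m : nat) (D : 'I_m -> asd) : asd :=
  @ASD (prod_state D)
    [set prod_part p
      | p : {dffun forall i : 'I_m, {set {set st (D i)}}}
      & [forall i, p i \in parts (D i)]].

(* Main.v *)
Require Import Defs.
From HB Require Import structures.
From mathcomp Require Import all_boot all_order all_algebra all_fingroup.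
From Stdlib Require Import FunctionalExtensionality.
Set Implicit Arguments. Unset Strict Implicit. Unset Printing Implicit Defensive.
Import GRing.Theory Num.Theory.

Local Close Scope ring_scope.

Section Gen.
Variable S : finType.

Lemma kernel_preim (T : finType) (G : S -> T) : kernel G = preim_partition G [set: S].
Proof.
rewrite /kernel /preim_partition /equivalence_partition.
apply/setP => B; apply/imsetP/imsetP => [[x _ ->]|[x _ ->]]; exists x => //;
  apply/setP => y; rewrite !inE eq_sym.
all: try done.
Qed.

Lemma kernel_part (T : finType) (G : S -> T) : partition (kernel G) [set: S].
Proof. rewrite kernel_preim; exact: preim_partitionP. Qed.

Lemma pblock_kernel (T : finType) (G : S -> T) x : pblock (kernel G) x = [set y | G y == G x].
Proof.
apply: def_pblock; first by case/and3P: (kernel_part G).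
  by apply/imsetP; exists x.
by rewrite inE.
Qed.

Lemma kernel_rel (T : finType) (G : S -> T) x y :
  (pblock (kernel G) x == pblock (kernel G) y) = (G x == G y).
Proof.
rewrite !pblock_kernel; apply/eqP/eqP => [E|E].
  by move: (E) => /setP/(_ x); rewrite !inE eqxx => /esym/eqP.
by apply/setP => z; rewrite !inE E.
Qed.

Lemma det_card (T1 T2 : finType) (F : S -> T1) (G : S -> T2) :
  (forall x y, F x = F y -> G x = G y) -> #|G @: [set: S]| <= #|F @: [set: S]|.
Proof.
move=> H; pose P := [set (F x, G x) | x in [set: S]].
have -> : G @: [set: S] = snd @: P by rewrite -imset_comp.
have -> : F @: [set: S] = fst @: P by rewrite -imset_comp.
rewrite [#|fst @: P|]card_in_imset ?leq_imset_card //.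
move=> _ _ /imsetP[x _ ->] /imsetP[y _ ->] /= E; by rewrite E (H _ _ E).
Qed.

Lemma det_conv (T1 T2 : finType) (F : S -> T1) (G : S -> T2) :
  (forall x y, F x = F y -> G x = G y) -> #|F @: [set: S]| <= #|G @: [set: S]| ->
  forall x y, G x = G y -> F x = F y.
Proof.
move=> H Hc; pose P := [set (F x, G x) | x in [set: S]].
have eG : G @: [set: S] = snd @: P by rewrite -imset_comp.
have eF : F @: [set: S] = fst @: P by rewrite -imset_comp.
have cF : #|fst @: P| = #|P|.
  rewrite card_in_imset //.
  move=> _ _ /imsetP[x _ ->] /imsetP[y _ ->] /= E; by rewrite E (H _ _ E).
have : #|snd @: P| == #|P|.
  by rewrite eqn_leq leq_imset_card -cF -eF -eG.
move/imset_injP => inj x y Exy.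
have := inj (F x, G x) (F y, G y) (imset_f _ (in_setT x)) (imset_f _ (in_setT y)) Exy.
by case.
Qed.

Lemma eqrel_card (T1 T2 : finType) (F : S -> T1) (G : S -> T2) :
  (forall x y, (F x == F y) = (G x == G y)) -> #|F @: [set: S]| = #|G @: [set: S]|.
Proof.
move=> H; apply/eqP; rewrite eqn_leq; apply/andP; split; apply: det_card => x y /eqP.
  by rewrite -H => /eqP.
by rewrite H => /eqP.
Qed.

Lemma part_pblock_eq (pi : {set {set S}}) : partition pi [set: S] -> pi = [set pblock pi x | x : S].
Proof.
case/and3P => /eqP cov tI n0; apply/setP => B; apply/idP/imsetP => [BP|[x _ ->]].
  have /set0Pn[x xB] : B != set0 by apply: contraNneq n0 => <-.
  by exists x => //; rewrite (def_pblock tI BP xB).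
by apply: pblock_mem; rewrite cov.
Qed.

Lemma part_eq_rel (a b : {set {set S}}) : partition a [set: S] -> partition b [set: S] ->
  (forall x y, (pblock a x == pblock a y) = (pblock b x == pblock b y)) -> a = b.
Proof.
move=> pa pb H.
have E x : pblock a x = pblock b x.
  case/and3P: pa => /eqP ca ta _; case/and3P: pb => /eqP cb tb _.
  apply/setP => y; rewrite -(eq_pblock _ ta) ?ca // -(eq_pblock _ tb) ?cb //.
rewrite (part_pblock_eq pa) (part_pblock_eq pb); apply: eq_imset => x; exact: E.
Qed.

Lemma refines_rel (S' : finType) (pi : {set {set S}}) (rho : {set {set S'}}) (phi : S -> S') :
  partition pi [set: S] -> refines (Defs.pcomp rho phi) pi ->
  forall x y, pblock rho (phi x) = pblock rho (phi y) -> pblock pi x = pblock pi y.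
Proof.
case/and3P => _ tI _ R x y E.
have Bin : [set z | pblock rho (phi z) == pblock rho (phi x)] \in Defs.pcomp rho phi.
  by apply/imsetP; exists x.
have [C CP sub] := R _ Bin.
have xC : x \in C by apply: (subsetP sub); rewrite inE.
have yC : y \in C by apply: (subsetP sub); rewrite inE E.
by rewrite (def_pblock tI CP xC) (def_pblock tI CP yC).
Qed.

End Gen.

Lemma refines_kernel (S S' T T' : finType) (G : S -> T) (G' : S' -> T') (phi : S -> S') :
  (forall x y, G' (phi x) = G' (phi y) -> G x = G y) -> refines (Defs.pcomp (kernel G') phi) (kernel G).
Proof.
move=> H B /imsetP[x _ ->]; exists [set y | G y == G x]; first by apply/imsetP; exists x.
apply/subsetP => y; rewrite !inE /=.
move/eqP/eqP; rewrite kernel_rel => /eqP E; apply/eqP; exact: H.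
Qed.

Local Close Scope ring_scope.

Definition cnt (S : finType) (pi : {set {set S}}) := #|pblock pi @: [set: S]|.
Definition Mx (D : asd) := \max_(pi in parts D) cnt pi.
Definition Full (D : asd) := [set pi in parts D | cnt pi == Mx D].
Definition meetc (S : finType) (a b : {set {set S}}) :=
  #|(fun x => (pblock a x, pblock b x)) @: [set: S]|.

Definition good (D : asd) :=
  (forall pi, pi \in parts D -> partition pi [set: st D]) /\
  (forall x y : st D, x != y -> exists2 pi, pi \in parts D & pblock pi x != pblock pi y).

Lemma le_data D D' : good D -> asd_le D D' ->
  exists phi : st D -> st D', exists alpha : {set {set st D}} -> {set {set st D'}},
   injective phi /\ forall pi, pi \in parts D -> alpha pi \in parts D' /\
     forall x y, pblock (alpha pi) (phi x) = pblock (alpha pi) (phi y) -> pblock pi x = pblock pi y.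
Proof.
move=> [HP HS] [phi [alpha H]]; exists phi, alpha; split; last first.
  move=> pi pP; have [aP R] := H pi pP; split => //; exact: refines_rel (HP _ pP) R.
move=> x y E; apply/eqP; apply: contraT => nxy.
have [pi pP Hne] := HS x y nxy; case/negP: Hne; apply/eqP.
have [_ R] := H pi pP; apply: refines_rel (HP _ pP) R _ _ _; by rewrite E.
Qed.

Section Transfer.
Variables D D' : asd.
Hypotheses (gD : good D) (gD' : good D') (eqv : asd_equiv D D').

Lemma transfer_all : Mx D = Mx D' /\
  forall (R : nmodType) (W : nat -> R),
  (\sum_(a in Full D) \sum_(b in Full D) W (meetc a b) =
   \sum_(a in Full D') \sum_(b in Full D') W (meetc a b))%R.
Proof.
case: eqv => le1 le2.
have [phi [alpha [inj1 H1]]] := le_data gD le1.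
have [psi [beta [inj2 H2]]] := le_data gD' le2.
have card_eq : #|st D| = #|st D'|.
  by apply/eqP; rewrite eqn_leq (leq_card phi inj1) (leq_card psi inj2).
have bij1 : bijective phi by apply: (@inj_card_bij _ _ phi inj1); rewrite card_eq.
have surj1 : phi @: [set: st D] = [set: st D'].
  apply/setP => y; rewrite inE; case: bij1 => g _ gK; apply/imsetP; exists (g y).
    by rewrite inE.
  by rewrite gK.
have cnt_le (E E' : asd) (f : st E -> st E') (al : {set {set st E}} -> {set {set st E'}}) pi :
   (forall x y, pblock (al pi) (f x) = pblock (al pi) (f y) -> pblock pi x = pblock pi y) ->
   cnt pi <= #|(fun x => pblock (al pi) (f x)) @: [set: st E]| <= cnt (al pi).
  move=> R; rewrite (det_card R) /=; apply: subset_leq_card.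
  by apply/subsetP => _ /imsetP[x _ ->]; apply: imset_f.
have M12 : Mx D <= Mx D'.
  apply/bigmax_leqP => pi pP; have [aP R] := H1 pi pP.
  case/andP: (cnt_le _ _ _ _ pi R) => c1 c2.
  apply: leq_trans (leq_trans c1 c2) _; exact: leq_bigmax_cond.
have M21 : Mx D' <= Mx D.
  apply/bigmax_leqP => pi pP; have [aP R] := H2 pi pP.
  case/andP: (cnt_le _ _ _ _ pi R) => c1 c2.
  apply: leq_trans (leq_trans c1 c2) _; exact: leq_bigmax_cond.
have MM : Mx D = Mx D' by apply/eqP; rewrite eqn_leq M12 M21.
split => // R W.
have full1 pi : pi \in Full D -> alpha pi \in Full D' /\
   forall x y, (pblock pi x == pblock pi y) = (pblock (alpha pi) (phi x) == pblock (alpha pi) (phi y)).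
  rewrite inE => /andP[pP /eqP cP]; have [aP R1] := H1 pi pP.
  case/andP: (cnt_le _ _ _ _ pi R1) => c1 c2.
  have c3 : cnt (alpha pi) <= Mx D' by exact: leq_bigmax_cond.
  have ca : cnt (alpha pi) = cnt pi.
    by apply/eqP; rewrite eqn_leq cP MM c3 -MM -cP (leq_trans c1 c2).
  split; first by rewrite inE aP /= ca cP MM.
  have Rc := det_conv R1.
  move=> x y; apply/eqP/eqP => [E|]; last exact: R1.
  apply: Rc E; by rewrite (leq_trans c2) // ca.
have full2 pi : pi \in Full D' -> beta pi \in Full D.
  rewrite inE => /andP[pP /eqP cP]; have [aP R1] := H2 pi pP.
  case/andP: (cnt_le _ _ _ _ pi R1) => c1 c2.
  have c3 : cnt (beta pi) <= Mx D by exact: leq_bigmax_cond.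
  have ca : cnt (beta pi) = cnt pi.
    by apply/eqP; rewrite eqn_leq cP -MM c3 MM -cP (leq_trans c1 c2).
  by rewrite inE aP /= ca cP MM.
have injF (E E' : asd) (al : {set {set st E}} -> {set {set st E'}}) (f : st E -> st E') :
  good E -> {in Full E, forall pi, forall x y,
     (pblock pi x == pblock pi y) = (pblock (al pi) (f x) == pblock (al pi) (f y))} ->
  {in Full E &, injective al}.
  move=> [HP _] Hr a b aF bF Eab; apply: part_eq_rel.
  - by move: aF; rewrite inE => /andP[/HP].
  - by move: bF; rewrite inE => /andP[/HP].
  by move=> x y; rewrite (Hr a aF) (Hr b bF) Eab.
have inj_al : {in Full D &, injective alpha}.
  apply: (injF _ _ _ phi gD) => pi /full1 []//.
have cF : #|Full D'| <= #|Full D|.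
  suff inj_be : {in Full D' &, injective beta}.
    rewrite -(card_in_imset inj_be); apply: subset_leq_card.
    by apply/subsetP => _ /imsetP[pi pF ->]; apply: full2.
  apply: (injF _ _ _ psi gD') => pi pF x y.
  rewrite inE in pF; case/andP: pF => pP /eqP cP.
  have [aP R1] := H2 pi pP.
  case/andP: (cnt_le _ _ _ _ pi R1) => c1 c2.
  have c3 : cnt (beta pi) <= Mx D by exact: leq_bigmax_cond.
  have ca : cnt (beta pi) = cnt pi.
    by apply/eqP; rewrite eqn_leq cP -MM c3 MM -cP (leq_trans c1 c2).
  apply/eqP/eqP => [E|]; last exact: R1.
  apply: (det_conv R1) E; by rewrite (leq_trans c2) // ca.
have imF : alpha @: Full D = Full D'.
  apply/eqP; rewrite eqEcard card_in_imset // cF andbT.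
  by apply/subsetP => _ /imsetP[pi pF ->]; case: (full1 _ pF).
have meet_eq a b : a \in Full D -> b \in Full D -> meetc (alpha a) (alpha b) = meetc a b.
  move=> aF bF; rewrite /meetc -surj1 -imset_comp; apply: eqrel_card => x y /=.
  have [_ Ra] := full1 _ aF; have [_ Rb] := full1 _ bF.
  by rewrite !xpair_eqE Ra Rb.
rewrite -imF big_imset //=; apply: eq_bigr => a aF.
rewrite big_imset //=; apply: eq_bigr => b bF; by rewrite meet_eq.
Qed.

End Transfer.

Local Open Scope ring_scope.


Lemma dep_distr (R : comPzSemiRingType) (I : finType) (T : I -> finType) (F : forall i, T i -> R) :
  \sum_(x : {dffun forall i, T i}) \prod_i F i (x i) = \prod_i \sum_(t : T i) F i t.
Proof.
rewrite (reindex (@dffun_of_fprod I T)); last exact/onW_bij/dffun_of_fprod_bij.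
pose P_ i := [ffun t : T i => F i t].
transitivity (\sum_(t : fprod T) \prod_(i in I) P_ i (t i)).
  by apply: eq_bigr => t _; apply: eq_bigr => i _; rewrite !ffunE.
rewrite big_fprod.
transitivity (\prod_i \sum_(j | tagged_with T i j) untag 0 (P_ i) j).
  by rewrite bigA_distr_big_dep.
apply: eq_bigr => i _.
transitivity (\sum_(t : T i) P_ i t); last by apply: eq_bigr => t _; rewrite ffunE.
by rewrite (big_tag (fun i (t : T i) => P_ i t)).
Qed.

Lemma F2_cases (a : 'F_2) : a = 0 \/ a = 1.
Proof. by case: a => -[|[|]] //= Ha; [left|right]; apply/val_inj. Qed.

Lemma F2_11 : (1 + 1 : 'F_2) = 0.
Proof. by apply/val_inj. Qed.

Lemma card_F2 : #|'F_2| = 2%N.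
Proof. by rewrite card_Fp. Qed.

Lemma dep_distr_cond (R : comPzSemiRingType) (I : finType) (T : I -> finType)
  (P : forall i, pred (T i)) (F : forall i, T i -> R) :
  \sum_(x : {dffun forall i, T i} | [forall i, P i (x i)]) \prod_i F i (x i)
  = \prod_i \sum_(t : T i | P i t) F i t.
Proof.
transitivity (\prod_i \sum_(t : T i) (if P i t then F i t else 0)); last first.
  by apply: eq_bigr => i _; rewrite [in RHS]big_mkcond.
rewrite -dep_distr big_mkcond /=; apply: eq_bigr => x _.
case: (boolP [forall i, P i (x i)]) => [/forallP H | /forallPn [i Hi]].
  by apply: eq_bigr => i _; rewrite H.
by rewrite (bigD1 i) //= (negbTE Hi) mul0r.
Qed.

Local Close Scope ring_scope.

Lemma eq_kernel (S T : finType) (f g : S -> T) : (forall x, f x = g x) -> kernel f = kernel g.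
Proof.
move=> H; apply: eq_imset => x; apply/setP => y; by rewrite !inE !H.
Qed.

Lemma prod_kernel (m : nat) (D : 'I_m -> asd) (T : finType) (p : {dffun forall i, {set {set st (D i)}}})
  (g : forall i, st (D i) -> T) :
  (forall i, p i = kernel (g i)) ->
  prod_part p = kernel (fun x : prod_state D => [ffun i => g i (x i)]).
Proof.
move=> Hp; apply/setP => Z; apply/imsetP/imsetP.
- case=> B; rewrite inE => /forallP HB ->.
  have Ex i : exists z, B i == [set y | g i y == g i z].
    by have := HB i; rewrite Hp => /imsetP[z _ ->]; exists z.
  exists [ffun i => xchoose (Ex i)] => //.
  apply/setP => x; rewrite !inE; apply/forallP/eqP => [H|H i].
    apply/ffunP => i; rewrite !ffunE; have Hz := eqP (xchooseP (Ex i)).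
    move: (xchoose (Ex i)) Hz => z Hz; have := H i; rewrite Hz inE.
    by move/eqP.
  move/ffunP: H => /(_ i); rewrite !ffunE; have Hz := eqP (xchooseP (Ex i)).
  move: (xchoose (Ex i)) Hz => z Hz E; by rewrite Hz inE E.
- case=> z _ ->; exists [ffun i => [set y | g i y == g i (z i)]].
    rewrite inE; apply/forallP => i; rewrite ffunE Hp; by apply/imsetP; exists (z i).
  apply/setP => x; rewrite !inE; apply/eqP/forallP => [H i|H].
    by move/ffunP: H => /(_ i); rewrite !ffunE inE => ->.
  apply/ffunP => i; rewrite !ffunE; by have := H i; rewrite ffunE inE => /eqP.
Qed.

Local Open Scope ring_scope.


Definition lf (k : nat) (c : 'cV['F_2]_k) (x : 'rV['F_2]_k) : 'F_2 := (x *m c) 0 0.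

Lemma lfD k (c : 'cV['F_2]_k) u v : lf c (u + v) = lf c u + lf c v.
Proof. by rewrite /lf mulmxDl mxE. Qed.

Lemma lfZ k (c : 'cV['F_2]_k) a u : lf c (a *: u) = a * lf c u.
Proof. by rewrite /lf -scalemxAl mxE. Qed.

Lemma lf0 k (c : 'cV['F_2]_k) : lf c 0 = 0.
Proof. by rewrite /lf mul0mx mxE. Qed.

Lemma lf_delta k (c : 'cV['F_2]_k) j : lf c (delta_mx 0 j) = c j 0.
Proof. by rewrite /lf -rowE mxE. Qed.

Lemma lf_lin k (c : 'cV['F_2]_k) : F2lin [ffun x => lf c x].
Proof.
apply/forallP => a; apply/forallP => u; apply/forallP => v; by rewrite !ffunE lfD lfZ.
Qed.

Lemma lin_lf k (f : {ffun 'rV['F_2]_k -> 'F_2}) : F2lin f ->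
  forall x, f x = lf (\col_j f (delta_mx 0 j)) x.
Proof.
move=> H.
have H' a u v : f (a *: u + v) = a * f u + f v.
  by move/forallP: H => /(_ a) /forallP /(_ u) /forallP /(_ v) /eqP.
have f0 : f 0 = 0.
  have := H' 1 0 0; rewrite scale1r addr0 mul1r => E.
  by apply: (addIr (f 0)); rewrite add0r -E.
have fD u v : f (u + v) = f u + f v by have := H' 1 u v; rewrite scale1r mul1r.
have fZ a u : f (a *: u) = a * f u by rewrite -[a *: u]addr0 H' f0 addr0.
move=> x; rewrite {1}(row_sum_delta x) (big_morph f fD f0) /lf mxE.
apply: eq_bigr => j _; by rewrite fZ mxE.
Qed.

Lemma lf_col k (x : 'rV['F_2]_k) j : lf (delta_mx j 0) x = x 0 j.
Proof. by rewrite /lf -colE mxE. Qed.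

Lemma cnt_kernel (S T : finType) (G : S -> T) : cnt (kernel G) = #|G @: [set: S]|.
Proof. by apply: eqrel_card => x y; rewrite kernel_rel. Qed.

Section Dk.
Variables (m : nat) (k : 'I_m -> nat).
Local Notation Dk := (prod_asd (fun i => L (k i))).

Definition Ct := {dffun forall i : 'I_m, 'cV['F_2]_(k i)}.
Definition Gc (c : Ct) (x : st Dk) : {ffun 'I_m -> 'F_2} := [ffun i => lf (c i) (x i)].
Definition allnz := [set c : Ct | [forall i, c i != 0]].

Lemma parts_Dk : parts Dk = [set kernel (Gc c) | c : Ct].
Proof.
apply/setP => pi; apply/imsetP/imsetP.
- case=> p; rewrite inE => /forallP Hp ->.
  have Ex i : exists f : {ffun 'rV['F_2]_(k i) -> 'F_2}, F2lin f && (p i == kernel (fun x => f x)).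
    by have /imsetP[f] := Hp i; rewrite inE => fl ->; exists f; rewrite fl eqxx.
  pose c : Ct := [ffun i => \col_j (xchoose (Ex i)) (delta_mx 0 j)].
  exists c => //; rewrite /Gc; apply: (prod_kernel (D := fun i => L (k i)) (g := fun i => lf (c i))) => i.
  rewrite /c ffunE; move: (xchoose (Ex i)) (xchooseP (Ex i)) => f /andP[fl /eqP ->].
  apply: eq_kernel => x; by rewrite (lin_lf fl).
- case=> c _ ->; exists [ffun i => kernel (lf (c i))].
    rewrite inE; apply/forallP => i; rewrite ffunE; apply/imsetP; exists [ffun x => lf (c i) x].
      by rewrite inE lf_lin.
    apply: eq_kernel => x; by rewrite ffunE.
  by rewrite (prod_kernel (D := fun i => L (k i)) (g := fun i => lf (c i))) // => i; rewrite ffunE.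
Qed.

Lemma good_Dk : good Dk.
Proof.
split.
  move=> pi; rewrite parts_Dk => /imsetP[c _ ->]; exact: kernel_part.
move=> x y nxy.
have /existsP[i xi] : [exists i, x i != y i].
  apply: contraNT nxy => /existsPn H; apply/eqP/ffunP => i; apply/eqP.
  by have := H i; rewrite negbK.
have /existsP[j xj] : [exists j : 'I_(k i), (x i : 'rV_(k i)) 0 j != (y i : 'rV_(k i)) 0 j].
  apply: contraNT xi => /existsPn H; apply/eqP/rowP => j; apply/eqP.
  by have := H j; rewrite negbK.
pose c : Ct := [ffun l => dfwith (fun l => 0 : 'cV['F_2]_(k l)) (delta_mx j 0 : 'cV['F_2]_(k i)) l].
exists (kernel (Gc c)); first by rewrite parts_Dk; apply/imsetP; exists c.
rewrite kernel_rel; apply: contra xj => /eqP/ffunP/(_ i); rewrite !ffunE dfwith_in.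
by rewrite !lf_col => ->.
Qed.

Lemma img_le c : (#|Gc c @: [set: st Dk]| <= 2 ^ m)%N.
Proof.
apply: leq_trans (max_card _) _; rewrite card_ffun !card_ord; exact: leqnn.
Qed.

Lemma img_full c : c \in allnz -> Gc c @: [set: st Dk] = [set: {ffun 'I_m -> 'F_2}].
Proof.
rewrite inE => /forallP nz; apply/setP => t; rewrite inE; apply/imsetP.
have Ej i : exists j : 'I_(k i), c i j 0 != 0.
  have /existsP[j Hj] : [exists j : 'I_(k i), c i j 0 != 0]; last by exists j.
  apply: contraNT (nz i) => /existsPn H.
  by apply/eqP/colP => j; rewrite mxE; have := H j; rewrite negbK => /eqP.
exists [ffun i => t i *: (delta_mx 0 (xchoose (Ej i)) : 'rV['F_2]_(k i))] => //.
apply/ffunP => i; rewrite !ffunE lfZ lf_delta.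
have := xchooseP (Ej i); case: (F2_cases (c i (xchoose (Ej i)) 0)) => -> //.
by rewrite mulr1.
Qed.

Lemma img_notfull c : c \notin allnz -> (#|Gc c @: [set: st Dk]| < 2 ^ m)%N.
Proof.
rewrite inE => /forallPn [i /negPn /eqP ci0].
have sub : Gc c @: [set: st Dk] \subset [set~ [ffun _ => 1]].
  apply/subsetP => _ /imsetP[x _ ->]; rewrite !inE; apply/eqP => /ffunP /(_ i).
  rewrite !ffunE ci0 /lf mulmx0 mxE => /eqP; by rewrite eq_sym oner_eq0.
apply: leq_ltn_trans (subset_leq_card sub) _.
rewrite cardsC1 card_ffun !card_ord prednK //; exact: expn_gt0.
Qed.

Hypothesis kpos : forall i, (0 < k i)%N.

Lemma exists_allnz : exists c, c \in allnz.
Proof.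
exists [ffun i => const_mx 1]; rewrite inE; apply/forallP => i; rewrite ffunE.
apply/eqP => /matrixP /(_ (Ordinal (kpos i)) 0); rewrite !mxE => /eqP; by rewrite oner_eq0.
Qed.

Lemma Mx_Dk : Mx Dk = (2 ^ m)%N.
Proof.
apply/eqP; rewrite eqn_leq; apply/andP; split.
  apply/bigmax_leqP => pi; rewrite parts_Dk => /imsetP[c _ ->]; rewrite cnt_kernel; exact: img_le.
have [c cnz] := exists_allnz.
have -> : (2 ^ m)%N = cnt (kernel (Gc c)).
  by rewrite cnt_kernel img_full // cardsT card_ffun !card_ord.
by apply: leq_bigmax_cond; rewrite parts_Dk; apply/imsetP; exists c.
Qed.

Lemma Full_Dk : Full Dk = [set kernel (Gc c) | c in allnz].
Proof.
apply/setP => pi; rewrite inE Mx_Dk parts_Dk; apply/andP/imsetP.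
  case=> /imsetP[c _ ->]; rewrite cnt_kernel => /eqP E; exists c => //.
  by apply: contraT => /img_notfull; rewrite E ltnn.
case=> c cnz ->; split; first by apply/imsetP; exists c.
by rewrite cnt_kernel img_full // cardsT card_ffun !card_ord.
Qed.

End Dk.

Local Open Scope ring_scope.


Lemma F2_neq (a b : 'F_2) : a != b -> (a = 0 /\ b = 1) \/ (a = 1 /\ b = 0).
Proof. by case: (F2_cases a) => ->; case: (F2_cases b) => ->; auto; rewrite eqxx. Qed.

Lemma col_nz n (c : 'cV['F_2]_n) : c != 0 -> exists j, c j 0 = 1.
Proof.
move=> nz; have /existsP[j Hj] : [exists j : 'I_n, c j 0 != 0].
  apply: contraNT nz => /existsPn H.
  by apply/eqP/colP => j; rewrite mxE; have := H j; rewrite negbK => /eqP.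
by exists j; case: (F2_cases (c j 0)) Hj => // ->; rewrite eqxx.
Qed.

Lemma F2_sep n (c0 c1 : 'cV['F_2]_n) : c0 != c1 -> c1 != 0 ->
  exists u, lf c0 u = 0 /\ lf c1 u = 1.
Proof.
move=> ne nz1; have [l' Hl'] := col_nz nz1.
have /existsP[J HJ] : [exists J : 'I_n, c0 J 0 != c1 J 0].
  apply: contraNT ne => /existsPn H.
  by apply/eqP/colP => j; have := H j; rewrite negbK => /eqP.
case: (F2_neq HJ) => [[h0 h1]|[h0 h1]].
  by exists (delta_mx 0 J); rewrite !lf_delta.
case: (F2_cases (c0 l' 0)) => h2.
  by exists (delta_mx 0 l'); rewrite !lf_delta.
exists (delta_mx 0 l' + delta_mx 0 J); rewrite !lfD !lf_delta h0 h1 h2 Hl' F2_11 addr0.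
by [].
Qed.

Lemma card_Si n (c0 c1 : 'cV['F_2]_n) : c0 != 0 -> c1 != 0 ->
  #|[set (lf c0 v, lf c1 v) | v : 'rV['F_2]_n]| = if c0 == c1 then 2%N else 4%N.
Proof.
move=> nz0 nz1; case: eqP => [<-|/eqP ne].
  have [j Hj] := col_nz nz0.
  have -> : [set (lf c0 v, lf c0 v) | v : 'rV['F_2]_n] = [set (0, 0); (1, 1)].
    apply/setP => -[a b]; rewrite !inE; apply/imsetP/orP.
      by case=> v _ [-> ->]; case: (F2_cases (lf c0 v)) => ->; [left|right].
    case=> /eqP [-> ->]; [exists 0 | exists (delta_mx 0 j)] => //; by rewrite ?lf0 ?lf_delta ?Hj.
  by rewrite cards2 xpair_eqE eq_sym oner_eq0.
have ne' : c1 != c0 by rewrite eq_sym.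
have [u1 [h11 h12]] := F2_sep ne' nz0.
have [u2 [h21 h22]] := F2_sep ne nz1.
have -> : [set (lf c0 v, lf c1 v) | v : 'rV['F_2]_n] = [set: 'F_2 * 'F_2].
  apply/setP => -[a b]; rewrite inE; apply/imsetP; exists (a *: u1 + b *: u2) => //.
  by rewrite !lfD !lfZ h11 h12 h21 h22 !mulr1 !mulr0 addr0 add0r.
by rewrite cardsT card_prod card_ord.
Qed.

Section Dk2.
Variables (m : nat) (k : 'I_m -> nat).
Local Notation Dk := (prod_asd (fun i => L (k i))).

Definition z0 : st Dk := [ffun l => 0 : 'rV['F_2]_(k l)].

Lemma Gc_inj : injective (fun c : Ct k => kernel (Gc c)).
Proof.
move=> c c' /= E.
have R x y : (Gc c x == Gc c y) = (Gc c' x == Gc c' y).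
  by rewrite -(kernel_rel (Gc c)) -(kernel_rel (Gc c')) E.
apply/ffunP => i; apply/colP => j.
pose x : st Dk := [ffun l => dfwith (fun l => 0 : 'rV['F_2]_(k l)) (delta_mx 0 j : 'rV_(k i)) l].
have Ex (d : Ct k) : (Gc d x == Gc d z0) = (d i j 0 == 0).
  apply/eqP/eqP => [/ffunP/(_ i)|H].
    by rewrite !ffunE dfwith_in lf_delta lf0.
  apply/ffunP => l; rewrite !ffunE lf0; case: dfwithP => [|l' _]; by rewrite ?lf_delta ?lf0.
have := R x z0; rewrite !Ex.
by case: (F2_cases (c i j 0)) => ->; case: (F2_cases (c' i j 0)) => ->; rewrite ?eqxx ?oner_eq0.
Qed.

Lemma meetc_Gc (c c' : Ct k) : c \in allnz k -> c' \in allnz k ->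
  meetc (kernel (Gc c)) (kernel (Gc c')) = (\prod_i (if (c i : 'cV['F_2]_(k i)) == c' i then 2 else 4))%N.
Proof.
rewrite !inE => /forallP nz /forallP nz'.
rewrite /meetc.
transitivity #|(fun x : st Dk => [ffun i => (lf (c i) (x i), lf (c' i) (x i))]) @: [set: st Dk]|.
  apply: eqrel_card => x y; rewrite xpair_eqE !kernel_rel.
  apply/andP/eqP => [[/eqP/ffunP H1 /eqP/ffunP H2]|/ffunP H].
    apply/ffunP => i; have := H1 i; have := H2 i; rewrite !ffunE => -> ->; by [].
  split; apply/eqP/ffunP => i; have := H i; rewrite !ffunE; by case.
pose Si i := [set (lf (c i) v, lf (c' i) v) | v : 'rV['F_2]_(k i)].
have -> : (fun x : st Dk => [ffun i => (lf (c i) (x i), lf (c' i) (x i))]) @: [set: st Dk]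
    = [set t : {ffun 'I_m -> 'F_2 * 'F_2} | [forall i, t i \in Si i]].
  apply/setP => t; rewrite inE; apply/imsetP/forallP => [[x _ ->] i|H].
    by rewrite ffunE; apply/imsetP; exists (x i).
  have Ev i : exists v : 'rV['F_2]_(k i), t i == (lf (c i) v, lf (c' i) v).
    by have /imsetP[v _ ->] := H i; exists v.
  exists [ffun i => xchoose (Ev i)] => //; apply/ffunP => i; rewrite !ffunE.
  exact/eqP/(xchooseP (Ev i)).
rewrite cardsE (eq_card (B := family Si)); last by move=> t; rewrite !inE; apply/forallP/familyP.
rewrite card_family foldrE big_image /=; apply: eq_bigr => i _.
by rewrite card_Si.
Qed.

End Dk2.

Local Open Scope ring_scope.


Lemma logn_prod (I : finType) (w : I -> nat) : (forall i, 0 < w i)%N ->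
  logn 2 (\prod_i w i) = (\sum_i logn 2 (w i))%N.
Proof.
move=> wp.
suff : ((0 < \prod_i w i) && (logn 2 (\prod_i w i) == \sum_i logn 2 (w i)))%N.
  by case/andP => _ /eqP.
apply: (big_rec2 (fun s p => (0 < p) && (logn 2 p == s))%N) => [|i s p _ /andP[p0 /eqP <-]].
  by rewrite logn1.
by rewrite muln_gt0 wp p0 /= lognM ?wp ?p0.
Qed.

Lemma Xpow_prod m (b : 'I_m -> bool) :
  ('X^(2 * m - logn 2 (\prod_i (if b i then 2 else 4))%N) : {poly rat})
  = \prod_i (if b i then 'X else 1).
Proof.
rewrite logn_prod; last by move=> i; case: (b i).
have e i : logn 2 (if b i then 2 else 4) = (if b i then 1 else 2)%N by case: (b i).
under eq_bigr do rewrite e.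
have -> : (2 * m - \sum_i (if b i then 1 else 2) = \sum_i (2 - if b i then 1 else 2))%N.
  have : (\sum_i (if b i then 1 else 2) + \sum_i (2 - if b i then 1 else 2) = 2 * m)%N.
    rewrite -big_split /=.
    rewrite (eq_bigr (fun _ => 2%N)) => [|i _]; last by case: (b i).
    by rewrite sum_nat_const card_ord mulnC.
  move=> <-; by rewrite addKn.
rewrite -prodrXr; apply: eq_bigr => i _; by case: (b i); rewrite ?expr1 ?expr0.
Qed.

Lemma card_nz n : #|[pred t : 'cV['F_2]_n | t != 0]| = (2 ^ n - 1)%N.
Proof.
transitivity #|predC1 (0 : 'cV['F_2]_n)|; first by apply: eq_card => t; rewrite !inE.
by rewrite cardC1 card_mx card_ord muln1 subn1.
Qed.

Lemma inner_sum n (c0 : 'cV['F_2]_n) : c0 != 0 ->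
  \sum_(t : 'cV['F_2]_n | t != 0) (if c0 == t then 'X else 1 : {poly rat})
  = 'X + (2 ^ n - 2)%:R.
Proof.
move=> nz; rewrite (bigD1 c0) //= eqxx; congr (_ + _).
rewrite (eq_bigr (fun _ => 1)) => [|t /andP[_ ne]]; last by rewrite eq_sym (negbTE ne).
have -> : (2 ^ n - 2)%N = #|[pred t : 'cV['F_2]_n | (t != 0) && (t != c0)]|.
  have := cardD1 c0 [pred t : 'cV['F_2]_n | t != 0]; rewrite card_nz inE nz => E.
  have two : (2 ^ n - 2 = 2 ^ n - 1 - 1)%N by rewrite -subnDA.
  rewrite two E add1n subn1 /=; apply: eq_card => t; rewrite !inE andbC.
  by [].
by rewrite sumr_const.
Qed.

Section Dk3.
Variables (m : nat) (k : 'I_m -> nat).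
Hypothesis kpos : forall i, (0 < k i)%N.
Local Notation Dk := (prod_asd (fun i => L (k i))).

Lemma card_allnz : #|allnz k| = (\prod_i (2 ^ k i - 1))%N.
Proof.
transitivity #|(family (fun i => [pred t : 'cV['F_2]_(k i) | t != 0]) : simpl_pred (Ct k))|.
  by apply: eq_card => t; rewrite !inE; apply/forallP/familyP.
rewrite card_family foldrE big_image /=; apply: eq_bigr => i _.
by rewrite card_nz.
Qed.

Lemma sum_Dk :
  \sum_(a in Full Dk) \sum_(b in Full Dk) ('X^(2 * m - logn 2 (meetc a b)) : {poly rat})
  = (\prod_i (2 ^ k i - 1))%N%:R * \prod_i ('X + (2 ^ k i - 2)%:R).
Proof.
have inj : {in allnz k &, injective (fun c : Ct k => kernel (Gc c))}.
  by move=> c c' _ _ /Gc_inj.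
rewrite Full_Dk // big_imset //=.
transitivity (\sum_(c in allnz k) \sum_(c' in allnz k)
   \prod_i (if (c i : 'cV['F_2]_(k i)) == c' i then 'X else 1 : {poly rat})).
  apply: eq_bigr => c cnz; rewrite big_imset //=; apply: eq_bigr => c' cnz'.
  by rewrite meetc_Gc // Xpow_prod.
transitivity (\sum_(c in allnz k) \prod_i ('X + (2 ^ k i - 2)%:R : {poly rat})).
  apply: eq_bigr => c; rewrite inE => /forallP cnz.
  rewrite (eq_bigl (fun c' : Ct k => [forall i, (c' i : 'cV['F_2]_(k i)) != 0])); last first.
    by move=> c'; rewrite inE.
  rewrite (dep_distr_cond (fun i (t : 'cV['F_2]_(k i)) => t != 0)
     (fun i (t : 'cV['F_2]_(k i)) => if (c i : 'cV['F_2]_(k i)) == t then 'X else 1 : {poly rat})).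
  apply: eq_bigr => i _; exact: inner_sum.
by rewrite sumr_const card_allnz mulr_natl.
Qed.

End Dk3.

Local Open Scope ring_scope.


Lemma perm_le_L m (r : 'I_m -> nat) (g : 'S_m) :
  asd_le (prod_asd (fun i => L (r i))) (prod_asd (fun i => L (r (g i)))).
Proof.
pose phi (y : st (prod_asd (fun i => L (r i)))) : st (prod_asd (fun i => L (r (g i)))) :=
  [ffun i => y (g i)].
pose cc (c : Ct r) : Ct (fun i => r (g i)) := [ffun i => c (g i)].
exists phi, (fun pi => if [pick c : Ct r | pi == kernel (Gc c)] is Some c
                     then kernel (Gc (cc c)) else set0).
move=> pi; rewrite parts_Dk => /imsetP[c0 _ E0].
case: pickP => [c /eqP E|]; last by move/(_ c0); rewrite E0 eqxx.
split; first by rewrite parts_Dk; apply/imsetP; exists (cc c).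
rewrite E; apply: refines_kernel => x y /ffunP H.
apply/ffunP => j; have := H (g^-1 j)%g; rewrite !ffunE /= permKV.
by [].
Qed.

Lemma prod_map m (h : nat -> rat) (F : 'I_m -> nat) :
  \prod_i ('X - (h (F i))%:P) = \prod_(x <- map h [tuple F i | i < m]) ('X - x%:P).
Proof. by rewrite big_map big_tuple; apply: eq_bigr => i _; rewrite tnth_mktuple. Qed.

Lemma fac_rewrite (a : nat) : (0 < a)%N ->
  ('X + (2 ^ a - 2)%:R : {poly rat}) = 'X - (2%:R - (2 ^ a)%:R : rat)%:P.
Proof.
move=> a0; rewrite natrB; last by rewrite -{1}(expn1 2) leq_exp2l.
by rewrite polyCB opprB !polyC_natr addrC.
Qed.

Lemma hinj : injective (fun a : nat => (2%:R - (2 ^ a)%:R : rat)).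
Proof.
move=> a b /= /addrI /oppr_inj /eqP; rewrite eqr_nat => /eqP; exact: expnI.
Qed.

Local Close Scope ring_scope.

Theorem corollary1 (m n : nat) (k : 'I_m -> nat) (r : 'I_n -> nat) :
  (forall i, 0 < k i) -> (forall j, 0 < r j) ->
  (asd_equiv (prod_asd (fun i => L (k i))) (prod_asd (fun j => L (r j)))
   <-> exists (e : m = n) (g : 'S_m), forall i, k i = r (cast_ord e (g i))).
Proof.
move=> kp rp; split.
- move=> eqv; have [MM Hs] := transfer_all (good_Dk k) (good_Dk r) eqv.
  rewrite !Mx_Dk // in MM.
  have emn : m = n by apply/eqP; rewrite -(eqn_exp2l _ _ (ltnSn 1)) MM.
  subst n; exists erefl.
  have := Hs _ (fun j => 'X^(2 * m - logn 2 j) : {poly rat})%R; rewrite !sum_Dk //.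
  set Pk := (\prod_i _)%N; set Pr := (\prod_i _)%N.
  have monk : (\prod_i ('X + (2 ^ k i - 2)%:R : {poly rat}))%R \is monic.
    by apply: monic_prod => i _; rewrite fac_rewrite // monicXsubC.
  have monr : (\prod_i ('X + (2 ^ r i - 2)%:R : {poly rat}))%R \is monic.
    by apply: monic_prod => i _; rewrite fac_rewrite // monicXsubC.
  move=> E.
  have EP : (Pk%:R : {poly rat})%R = Pr%:R%R.
    have := congr1 lead_coef E; rewrite !lead_coef_Mmonic // -!polyC_natr !lead_coefC.
    by move=> ->.
  have Pk0 : (Pk%:R : {poly rat})%R != 0%R.
    rewrite -polyC_natr polyC_eq0 pnatr_eq0 -lt0n prodn_gt0 // => i.
    by rewrite subn_gt0 -{1}(expn0 2) ltn_exp2l.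
  rewrite -EP in E; move/(mulfI Pk0): E.
  rewrite (eq_bigr (fun i => 'X - (2%:R - (2 ^ k i)%:R : rat)%:P)%R); last by move=> i _; rewrite fac_rewrite.
  rewrite [in RHS](eq_bigr (fun i => 'X - (2%:R - (2 ^ r i)%:R : rat)%:P)%R); last by move=> i _; rewrite fac_rewrite.
  rewrite (prod_map (fun a => 2%:R - (2 ^ a)%:R)%R k) (prod_map (fun a => 2%:R - (2 ^ a)%:R)%R r).
  move/prod_XsubC_eq.
  move/(perm_map_inj hinj)/tuple_permP => [p Ep].
  exists p => i; rewrite cast_ord_id.
  have := congr1 (fun t : m.-tuple nat => tnth t i) (val_inj Ep).
  by rewrite /= !tnth_mktuple.
- case=> e [g Hg]; subst n.
  have -> : k = (fun i => r (g i)).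
    by apply: functional_extensionality => i; rewrite Hg cast_ord_id.
  split; last exact: perm_le_L.
  have H := perm_le_L (fun i => r (g i)) (g^-1)%g; simpl in H.
  have E : (fun i => L (r (g ((g^-1)%g i)))) = (fun i => L (r i)).
    by apply: functional_extensionality => i; rewrite permKV.
  by rewrite E in H.
Qed.
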